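(* Let $X$ be a Tychonoff space with $|X|>1$ and let $I\neq J$ be vertices of $\mathbb{AG}(X)$. Then: (a) $d(I,J)=1$ iff $\mathcal{O}(I)\cap\mathcal{O}(J)=\emptyset$; (b) $d(I,J)=2$ iff $\mathcal{O}(I)\cap\mathcal{O}(J)\neq\emptyset$ and $\overline{\mathcal{O}(I)\cup\mathcal{O}(J)}\neq X$; (c) $d(I,J)=3$ iff $\mathcal{O}(I)\cap\mathcal{O}(J)\neq\emptyset$ and $\overline{\mathcal{O}(I)\cup\mathcal{O}(J)}=X$.
   Context: $C(X)$ denotes the ring of all real-valued continuous functions on $X$; $\mathrm{Coz}(f)=\{x: f(x)\neq 0\}$; for $S\subseteq C(X)$, $\mathcal{O}(S)=\bigcup_{f\in S}\mathrm{Coz}(f)$. $\mathbb{A}(X)$ is the set of nonzero ideals $I$ of $C(X)$ for which there is a nonzero ideal $J$ with $IJ=\{0\}$. The annihilating-ideal graph $\mathbb{AG}(X)$ has vertex set $\mathbb{A}(X)$, distinct vertices $I,J$ being adjacent iff $IJ=\{0\}$. $d(I,J)$ is the length of a shortest path between $I$ and $J$. *)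

(* Defs.v *)
From Stdlib Require Import Reals.
Open Scope R_scope.

Section Topo.

Variable X : Type.
Variable op : (X -> Prop) -> Prop.

Definition is_topology : Prop :=
  op (fun _ => True) /\ op (fun _ => False) /\
  (forall U V, op U -> op V -> op (fun x => U x /\ V x)) /\
  (forall (F : (X -> Prop) -> Prop),
      (forall U, F U -> op U) -> op (fun x => exists U, F U /\ U x)).

Definition is_closed (A : X -> Prop) : Prop := op (fun x => ~ A x).

Definition R_open (U : R -> Prop) : Prop :=
  forall y, U y -> exists eps, 0 < eps /\ forall z, Rabs (z - y) < eps -> U z.

Definition cont (f : X -> R) : Prop :=
  forall U, R_open U -> op (fun x => U (f x)).

Definition tychonoff : Prop :=
  (forall x : X, is_closed (fun y => y = x)) /\
  (forall (F : X -> Prop) (x : X), is_closed F -> ~ F x ->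
     exists f, cont f /\ (forall y, 0 <= f y <= 1) /\ f x = 0 /\
               (forall y, F y -> f y = 1)).

Definition closure (A : X -> Prop) (x : X) : Prop :=
  forall U, op U -> U x -> exists y, U y /\ A y.

Definition zerof : X -> R := fun _ => 0.

Definition is_ideal (I : (X -> R) -> Prop) : Prop :=
  (forall f, I f -> cont f) /\
  I zerof /\
  (forall f g, I f -> I g -> I (fun x => f x - g x)) /\
  (forall f r, I f -> cont r -> I (fun x => r x * f x)).

Definition nonzero_ideal (I : (X -> R) -> Prop) : Prop :=
  is_ideal I /\ exists f, I f /\ f <> zerof.

Inductive prod_ideal (I J : (X -> R) -> Prop) : (X -> R) -> Prop :=
| prod_zero : prod_ideal I J zerof
| prod_add : forall f g h, I f -> J g -> prod_ideal I J h ->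
    prod_ideal I J (fun x => f x * g x + h x).

Definition prod_is_zero (I J : (X -> R) -> Prop) : Prop :=
  forall h, prod_ideal I J h <-> h = zerof.

Definition is_vertex (I : (X -> R) -> Prop) : Prop :=
  nonzero_ideal I /\ exists J, nonzero_ideal J /\ prod_is_zero I J.

Definition adj (I J : (X -> R) -> Prop) : Prop :=
  is_vertex I /\ is_vertex J /\ I <> J /\ prod_is_zero I J.

Inductive walk : ((X -> R) -> Prop) -> ((X -> R) -> Prop) -> nat -> Prop :=
| walk0 : forall I, walk I I 0
| walkS : forall I K J n, adj I K -> walk K J n -> walk I J (S n).

Definition dist_eq (I J : (X -> R) -> Prop) (n : nat) : Prop :=
  walk I J n /\ forall m, (m < n)%nat -> ~ walk I J m.

Definition Ocoz (S : (X -> R) -> Prop) (x : X) : Prop :=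
  exists f, S f /\ f x <> 0.

End Topo.
Arguments is_topology {X}. Arguments tychonoff {X}. Arguments is_vertex {X}. Arguments dist_eq {X}. Arguments closure {X}. Arguments Ocoz {X}. Arguments cont {X}. Arguments adj {X}. Arguments walk {X}. Arguments is_ideal {X}. Arguments nonzero_ideal {X}. Arguments prod_is_zero {X}. Arguments prod_ideal {X}. Arguments zerof {X}. Arguments is_closed {X}.

(* Main.v *)
Require Import Defs.
From Stdlib Require Import Reals Lra Psatz Classical FunctionalExtensionality PropExtensionality.
Open Scope R_scope.

Lemma op_ext (X : Type) (op : (X -> Prop) -> Prop) (U V : X -> Prop) :
  op U -> (forall x, U x <-> V x) -> op V.
Proof.
  intros H E. replace V with U; auto.
  apply functional_extensionality; intro x; apply propositional_extensionality; auto.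
Qed.

Lemma op_local (X : Type) (op : (X -> Prop) -> Prop) (Ht : is_topology op) (V : X -> Prop) :
  (forall x, V x -> exists W, op W /\ W x /\ forall y, W y -> V y) -> op V.
Proof.
  intros H. destruct Ht as [_ [_ [_ Hu]]].
  apply op_ext with (fun x => exists U, (op U /\ forall y, U y -> V y) /\ U x).
  - apply (Hu (fun U => op U /\ forall y, U y -> V y)). intros U [HU _]; exact HU.
  - intro x; split.
    + intros [U [[_ HU] Ux]]; auto.
    + intros Vx. destruct (H x Vx) as [W [? [? ?]]]. exists W; split; [split|]; auto.
Qed.

Lemma ball_open (X : Type) (op : (X -> Prop) -> Prop) (f : X -> R) (c d : R) :
  cont op f -> op (fun y => Rabs (f y - c) < d).
Proof.
  intros Hf. apply (Hf (fun z => Rabs (z - c) < d)). intros z Hz.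
  exists (d - Rabs (z - c)). split. lra. intros w Hw.
  replace (w - c) with ((w - z) + (z - c)) by ring.
  pose proof (Rabs_triang (w-z) (z-c)). lra.
Qed.

Lemma cont2 (X : Type) (op : (X -> Prop) -> Prop) (Ht : is_topology op)
  (h : R -> R -> R) (f g : X -> R) :
  (forall a b eps, 0 < eps -> exists d, 0 < d /\ forall a' b',
      Rabs (a' - a) < d -> Rabs (b' - b) < d -> Rabs (h a' b' - h a b) < eps) ->
  cont op f -> cont op g -> cont op (fun x => h (f x) (g x)).
Proof.
  intros Hh Hf Hg U HU. apply op_local; auto. intros x Ux.
  destruct (HU _ Ux) as [eps [Heps HE]].
  destruct (Hh (f x) (g x) eps Heps) as [d [Hd Hd']].
  exists (fun y => Rabs (f y - f x) < d /\ Rabs (g y - g x) < d). split.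
  { destruct Ht as [_ [_ [Hi _]]]. apply Hi; apply ball_open; auto. }
  split.
  { replace (f x - f x) with 0 by ring. replace (g x - g x) with 0 by ring.
    rewrite Rabs_R0; auto. }
  intros y [H1 H2]. apply HE. apply Hd'; auto.
Qed.

Lemma mul_cont2 : forall a b eps, 0 < eps -> exists d, 0 < d /\ forall a' b',
      Rabs (a' - a) < d -> Rabs (b' - b) < d -> Rabs (a' * b' - a * b) < eps.
Proof.
  intros a b eps He.
  set (k := Rabs a + Rabs b + 1).
  assert (Hk : 0 < k) by (unfold k; pose proof (Rabs_pos a); pose proof (Rabs_pos b); lra).
  exists (Rmin 1 (eps / k)). split.
  { apply Rmin_glb_lt. lra. apply Rdiv_lt_0_compat; lra. }
  intros a' b' Ha Hb.
  assert (d1 : Rmin 1 (eps / k) <= 1) by apply Rmin_l.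
  assert (d2 : Rmin 1 (eps / k) <= eps / k) by apply Rmin_r.
  set (d := Rmin 1 (eps / k)) in *.
  assert (dk : d * k <= eps).
  { apply Rmult_le_compat_r with (r := k) in d2; [|lra].
    unfold Rdiv in d2. rewrite Rmult_assoc, Rinv_l in d2; lra. }
  replace (a' * b' - a * b) with (a' * (b' - b) + (a' - a) * b) by ring.
  pose proof (Rabs_triang (a' * (b' - b)) ((a' - a) * b)).
  rewrite !Rabs_mult in H.
  assert (Hp : Rabs a' <= Rabs a + Rabs (a' - a)).
  { replace a' with (a + (a' - a)) at 1 by ring. apply Rabs_triang. }
  pose proof (Rabs_pos (b' - b)). pose proof (Rabs_pos (a' - a)).
  pose proof (Rabs_pos a). pose proof (Rabs_pos b). pose proof (Rabs_pos a').
  assert (Rabs a' * Rabs (b' - b) <= (Rabs a + 1) * Rabs (b' - b)) by nra.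
  assert ((Rabs a + 1) * Rabs (b' - b) < (Rabs a + 1) * d) by nra.
  assert (Rabs (a' - a) * Rabs b <= d * Rabs b) by nra.
  unfold k in dk. nra.
Qed.

Lemma sub_cont2 : forall a b eps, 0 < eps -> exists d, 0 < d /\ forall a' b',
      Rabs (a' - a) < d -> Rabs (b' - b) < d -> Rabs ((a' - b') - (a - b)) < eps.
Proof.
  intros a b eps He. exists (eps / 2). split. lra. intros a' b' Ha Hb.
  replace ((a' - b') - (a - b)) with ((a' - a) + - (b' - b)) by ring.
  pose proof (Rabs_triang (a' - a) (- (b' - b))). rewrite Rabs_Ropp in H. lra.
Qed.

Lemma cont_mul (X : Type) (op : (X -> Prop) -> Prop) (Ht : is_topology op) (f g : X -> R) :
  cont op f -> cont op g -> cont op (fun x => f x * g x).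
Proof. apply (cont2 X op Ht Rmult f g mul_cont2). Qed.

Lemma cont_sub (X : Type) (op : (X -> Prop) -> Prop) (Ht : is_topology op) (f g : X -> R) :
  cont op f -> cont op g -> cont op (fun x => f x - g x).
Proof. apply (cont2 X op Ht Rminus f g sub_cont2). Qed.

Lemma cont_const (X : Type) (op : (X -> Prop) -> Prop) (Ht : is_topology op) (c : R) :
  cont op (fun _ : X => c).
Proof.
  intros U _. destruct Ht as [HT [HF _]]. destruct (classic (U c)).
  - apply op_ext with (fun _ => True); auto. intros; tauto.
  - apply op_ext with (fun _ => False); auto. intros; tauto.
Qed.

Definition disj {X : Type} (I J : (X -> R) -> Prop) := forall x, ~ (Ocoz I x /\ Ocoz J x).

Lemma PZ (X : Type) (I J : (X -> R) -> Prop) : prod_is_zero I J <-> disj I J.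
Proof.
  split.
  - intros H x [[f [If fx]] [g [Jg gx]]].
    assert (P : prod_ideal I J (fun y => f y * g y + zerof y)) by (apply prod_add; auto; apply prod_zero).
    apply H in P. apply (f_equal (fun k => k x)) in P. unfold zerof in P. simpl in P.
    destruct (Rmult_integral (f x) (g x)); [lra | auto | auto].
  - intros H h; split.
    + intros P; induction P. reflexivity.
      apply functional_extensionality; intro x. rewrite IHP. unfold zerof.
      destruct (Req_dec (f x) 0) as [e|n]. rewrite e; ring.
      destruct (Req_dec (g x) 0) as [e|m]. rewrite e; ring.
      exfalso; apply (H x); split; [exists f | exists g]; auto.
    + intros ->; apply prod_zero.
Qed.

Lemma disj_sym (X : Type) (I J : (X -> R) -> Prop) : disj I J -> disj J I.
Proof. intros H x [A B]; apply (H x); auto. Qed.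

Lemma nz_ex (X : Type) op (I : (X -> R) -> Prop) : nonzero_ideal op I -> exists x, Ocoz I x.
Proof.
  intros [_ [f [If fnz]]]. apply NNPP; intro C. apply fnz.
  apply functional_extensionality; intro x. unfold zerof.
  apply NNPP; intro n. apply C; exists x, f; auto.
Qed.

Lemma neq_disj (X : Type) op (I K : (X -> R) -> Prop) :
  nonzero_ideal op I -> disj I K -> I <> K.
Proof.
  intros N D E; subst. destruct (nz_ex _ _ _ N) as [x Hx]. apply (D x); auto.
Qed.

Lemma Ocoz_open (X : Type) (op : (X -> Prop) -> Prop) (Ht : is_topology op) (I : (X -> R) -> Prop) :
  is_ideal op I -> op (Ocoz I).
Proof.
  intros [Hc _]. apply op_local; auto. intros x [f [If fx]].
  exists (fun y => f y <> 0). split; [|split; auto].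
  - apply (Hc f If (fun z => z <> 0)). intros z Hz. exists (Rabs z). split.
    + apply Rabs_pos_lt; auto.
    + intros w Hw E. subst w. replace (0 - z) with (- z) in Hw by ring.
      rewrite Rabs_Ropp in Hw. lra.
  - intros y Hy. exists f; auto.
Qed.

Lemma adj_of (X : Type) op (I K : (X -> R) -> Prop) :
  is_vertex op I -> is_vertex op K -> disj I K -> adj op I K.
Proof.
  intros HI HK D. split; [auto|split; [auto|split]].
  - apply (neq_disj X op); auto. apply HI.
  - apply PZ; auto.
Qed.

Lemma vertex_of (X : Type) op (L I : (X -> R) -> Prop) :
  nonzero_ideal op L -> nonzero_ideal op I -> disj L I -> is_vertex op L.
Proof. intros HL HI D. split; auto. exists I; split; auto. apply PZ; auto. Qed.

Lemma adj_disj (X : Type) op (I K : (X -> R) -> Prop) : adj op I K -> disj I K.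
Proof. intros [_ [_ [_ H]]]. apply PZ; auto. Qed.

Lemma winv0 (X : Type) op (I J : (X -> R) -> Prop) : walk op I J 0 -> I = J.
Proof. intros H; inversion H; auto. Qed.

Lemma winv1 (X : Type) op (I J : (X -> R) -> Prop) : walk op I J 1 -> adj op I J.
Proof. intros H; inversion H as [|I0 K J0 n A W]; subst. apply winv0 in W; subst; auto. Qed.

Lemma winv2 (X : Type) op (I J : (X -> R) -> Prop) : walk op I J 2 ->
  exists K, adj op I K /\ adj op K J.
Proof. intros H; inversion H as [|I0 K J0 n A W]; subst. apply winv1 in W. eauto. Qed.

Lemma W2_closure (X : Type) (op : (X -> Prop) -> Prop) (Ht : is_topology op)
  (I J K : (X -> R) -> Prop) :
  adj op I K -> adj op K J -> ~ (forall x, closure op (fun y => Ocoz I y \/ Ocoz J y) x).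
Proof.
  intros A1 A2 C.
  pose proof (adj_disj _ _ _ _ A1) as D1. pose proof (adj_disj _ _ _ _ A2) as D2.
  destruct A1 as [_ [[HK _] _]].
  destruct (nz_ex _ _ _ HK) as [x0 Hx0].
  destruct (C x0 (Ocoz K) (Ocoz_open X op Ht K (proj1 HK)) Hx0) as [y [Ky [Iy|Jy]]].
  - apply (D1 y); auto.
  - apply (D2 y); auto.
Qed.

Lemma W2_build (X : Type) (op : (X -> Prop) -> Prop) (Ht : is_topology op) (Hty : tychonoff op)
  (I J : (X -> R) -> Prop) :
  is_vertex op I -> is_vertex op J ->
  ~ (forall x, closure op (fun y => Ocoz I y \/ Ocoz J y) x) -> walk op I J 2.
Proof.
  intros HI HJ C.
  apply not_all_ex_not in C. destruct C as [x C]. unfold closure in C.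
  apply not_all_ex_not in C. destruct C as [U C].
  apply imply_to_and in C. destruct C as [HU C].
  apply imply_to_and in C. destruct C as [Ux Hy].
  destruct Hty as [_ Hcr].
  assert (Hcl : is_closed op (fun y => ~ U y)).
  { unfold is_closed. apply op_ext with U; auto. intros z; split; [tauto|apply NNPP]. }
  destruct (Hcr _ x Hcl (fun n => n Ux)) as [f [Hf [_ [fx0 f1]]]].
  set (K := fun h : X -> R => cont op h /\ forall y, ~ U y -> h y = 0).
  assert (HKi : is_ideal op K).
  { split; [|split; [|split]].
    - intros h [Hh _]; auto.
    - split. unfold zerof. apply cont_const; auto. intros; reflexivity.
    - intros h k [Hh Hh0] [Hk Hk0]. split. apply cont_sub; auto.
      intros y Uy. rewrite Hh0, Hk0; auto; ring.
    - intros h r [Hh Hh0] Hr. split. apply cont_mul; auto.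
      intros y Uy. rewrite Hh0; auto; ring. }
  assert (HKn : nonzero_ideal op K).
  { split; auto. exists (fun y => 1 - f y). split.
    - split. exact (cont_sub X op Ht (fun _ => 1) f (cont_const X op Ht 1) Hf).
      intros y Uy. rewrite f1; auto; ring.
    - intro E. apply (f_equal (fun k => k x)) in E. unfold zerof in E. simpl in E.
      rewrite fx0 in E. lra. }
  assert (DI : disj K I).
  { intros y [[h [[_ Hh] hy]] Iy]. apply Hy; exists y. split.
    apply NNPP; intro nU; apply hy; apply Hh; auto. left; auto. }
  assert (DJ : disj K J).
  { intros y [[h [[_ Hh] hy]] Jy]. apply Hy; exists y. split.
    apply NNPP; intro nU; apply hy; apply Hh; auto. right; auto. }
  assert (VK : is_vertex op K) by (apply (vertex_of X op K I); auto; apply HI).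
  apply (walkS X op I K J 1).
  - apply adj_of; auto. apply disj_sym; auto.
  - apply (walkS X op K J J 0). apply adj_of; auto. apply walk0.
Qed.

Lemma W3_build (X : Type) (op : (X -> Prop) -> Prop) (Ht : is_topology op)
  (I J : (X -> R) -> Prop) :
  is_vertex op I -> is_vertex op J ->
  (forall x, closure op (fun y => Ocoz I y \/ Ocoz J y) x) -> walk op I J 3.
Proof.
  intros HI HJ C.
  destruct HI as [NI [L [NL PL]]]. destruct HJ as [NJ [M [NM PM]]].
  apply PZ in PL. apply PZ in PM.
  assert (VI : is_vertex op I) by (split; auto; exists L; split; auto; apply PZ; auto).
  assert (VJ : is_vertex op J) by (split; auto; exists M; split; auto; apply PZ; auto).
  assert (VL : is_vertex op L) by (apply (vertex_of X op L I); auto; apply disj_sym; auto).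
  assert (VM : is_vertex op M) by (apply (vertex_of X op M J); auto; apply disj_sym; auto).
  assert (DLM : disj L M).
  { intros x [Lx Mx].
    assert (HO : op (fun y => Ocoz L y /\ Ocoz M y)).
    { pose proof (Ocoz_open X op Ht L (proj1 NL)) as O1.
      pose proof (Ocoz_open X op Ht M (proj1 NM)) as O2.
      destruct Ht as [HT [HF [Hi Hu]]]. apply Hi; auto. }
    destruct (C x _ HO (conj Lx Mx)) as [y [[Ly My] [Iy|Jy]]].
    - apply (PL y); auto.
    - apply (PM y); auto. }
  apply (walkS X op I L J 2). apply adj_of; auto.
  apply (walkS X op L M J 1). apply adj_of; auto.
  apply (walkS X op M J J 0). apply adj_of; auto. apply disj_sym; auto.
  apply walk0.
Qed.

Theorem mainTheorem9 (X : Type) (op : (X -> Prop) -> Prop)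
  (Htop : is_topology op) (Hty : tychonoff op)
  (Hcard : exists x y : X, x <> y)
  (I J : (X -> R) -> Prop)
  (HI : is_vertex op I) (HJ : is_vertex op J) (HIJ : I <> J) :
  (dist_eq op I J 1 <->
     (forall x, ~ (Ocoz I x /\ Ocoz J x))) /\
  (dist_eq op I J 2 <->
     ((exists x, Ocoz I x /\ Ocoz J x) /\
      ~ (forall x, closure op (fun y => Ocoz I y \/ Ocoz J y) x))) /\
  (dist_eq op I J 3 <->
     ((exists x, Ocoz I x /\ Ocoz J x) /\
      (forall x, closure op (fun y => Ocoz I y \/ Ocoz J y) x))).
Proof.
  assert (W1 : walk op I J 1 <-> disj I J).
  { split. intros H; apply winv1 in H; apply (adj_disj X op); auto.
    intros D. apply (walkS X op I J J 0). apply adj_of; auto. apply walk0. }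
  assert (N0 : ~ walk op I J 0) by (intro H; apply winv0 in H; auto).
  assert (W2 : walk op I J 2 -> ~ (forall x, closure op (fun y => Ocoz I y \/ Ocoz J y) x)).
  { intros H; apply winv2 in H; destruct H as [K [A B]]. apply (W2_closure X op Htop I J K); auto. }
  assert (EX : ~ disj I J -> exists x, Ocoz I x /\ Ocoz J x).
  { intros nd. apply NNPP; intro C. apply nd. intros x Hx. apply C; eauto. }
  assert (EXn : (exists x, Ocoz I x /\ Ocoz J x) -> ~ disj I J).
  { intros [x Hx] D. apply (D x Hx). }
  split; [|split].
  - split.
    + intros [H _]. apply W1; auto.
    + intros D. split. apply W1; auto. intros m Hm. replace m with 0%nat by lia. auto.
  - split.
    + intros [H Hm]. split.
      * apply EX. intro D. apply (Hm 1%nat); [lia|]. apply W1; auto.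
      * apply W2; auto.
    + intros [E nC]. split. apply W2_build; auto.
      intros m Hm. destruct m as [|[|m]]; auto. intro W. apply (EXn E). apply W1; auto. lia.
  - split.
    + intros [H Hm]. split.
      * apply EX. intro D. apply (Hm 1%nat); [lia|]. apply W1; auto.
      * apply NNPP; intro nC. apply (Hm 2%nat); [lia|]. apply W2_build; auto.
    + intros [E Cl]. split. apply W3_build; auto.
      intros m Hm. destruct m as [|[|[|m]]]; auto.
      * intro W. apply (EXn E). apply W1; auto.
      * intro W. apply (W2 W); auto.
      * lia.
Qed.
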